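(* Let $X\in\mathbb{R}^{n\times p}$ and $\Psi=\frac1nX^\top X$ satisfy $\Psi_{jj}=1$ and $\max_{j'\ne j}|\Psi_{jj'}|\le\frac{1}{7\alpha s}$ for all $j\in[p]$, for some integer $s\ge1$ and some $\alpha>1$. Let $B^*\in\mathbb{R}^{p\times q}$ with row support $\mathcal S^*=\{j:\|B^*_{j:}\|_2\ne0\}$ satisfying $|\mathcal S^*|\le s$, and let $\hat B\in\mathbb{R}^{p\times q}$ be such that $\Delta=\hat B-B^*$ satisfies $\|\Delta_{\mathcal S^{*c}}\|_{2,1}\le3\|\Delta_{\mathcal S^*}\|_{2,1}$. Then (a) $\|\Delta_{\mathcal S^*}\|_F\le\frac{\alpha}{\alpha-1}4\sqrt s\,\|\Psi\Delta\|_{2,\infty}$; (b) $\|\Delta\|_{2,1}\le\frac{\alpha}{\alpha-1}16s\,\|\Psi\Delta\|_{2,\infty}$; (c) $\|\Delta\|_{2,\infty}\le\Big(1+\frac{16}{7(\alpha-1)}\Big)\|\Psi\Delta\|_{2,\infty}$.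
   Context: $M_{j:}$ is the $j$-th row of $M$; $\|M\|_{2,1}=\sum_j\|M_{j:}\|_2$, $\|M\|_{2,\infty}=\max_j\|M_{j:}\|_2$, $\|\cdot\|_F$ Frobenius norm. For $\mathcal S\subset[p]$, $M_{\mathcal S}$ equals $M$ on rows indexed by $\mathcal S$ and is zero elsewhere; $\mathcal S^{*c}=[p]\setminus\mathcal S^*$. *)

(* Defs.v *)
From HB Require Import structures.
From mathcomp Require Import all_boot all_order all_algebra.
From mathcomp Require Import reals.
Set Implicit Arguments. Unset Strict Implicit. Unset Printing Implicit Defensive.
Import Order.TTheory GRing.Theory Num.Theory.
Local Open Scope ring_scope.

Section Norms.
Variable R : realType.

Definition rownorm (p q : nat) (M : 'M[R]_(p, q)) (j : 'I_p) : R :=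
  Num.sqrt (\sum_(k < q) M j k ^+ 2).

Definition norm21 (p q : nat) (M : 'M[R]_(p, q)) : R :=
  \sum_(j < p) rownorm M j.

(* ||M||_{2,oo} = max_j ||M_{j:}||_2 (0 for an empty matrix; row norms are >= 0) *)
Definition norm2inf (p q : nat) (M : 'M[R]_(p, q)) : R :=
  \big[Num.max/0]_(j < p) rownorm M j.

Definition frob (p q : nat) (M : 'M[R]_(p, q)) : R :=
  Num.sqrt (\sum_(j < p) \sum_(k < q) M j k ^+ 2).

Definition rowrestr (p q : nat) (S : {set 'I_p}) (M : 'M[R]_(p, q)) : 'M[R]_(p, q) :=
  \matrix_(j, k) (if j \in S then M j k else 0).

Definition rowsupp (p q : nat) (M : 'M[R]_(p, q)) : {set 'I_p} :=
  [set j | rownorm M j != 0].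

End Norms.

(* Main.v *)
Require Import Defs.
From HB Require Import structures.
From mathcomp Require Import all_boot all_order all_algebra.
From mathcomp Require Import reals.
From mathcomp Require Import ring lra.
Import Order.TTheory GRing.Theory Num.Theory.
Local Open Scope ring_scope.
Set Implicit Arguments. Unset Strict Implicit.

Section H.
Variable R : realType.

Definition nrm (q : nat) (f : 'I_q -> R) : R := Num.sqrt (\sum_k f k ^+ 2).
Arguments nrm {q}.

Lemma sumsq_ge0 q (f : 'I_q -> R) : 0 <= \sum_k f k ^+ 2.
Proof. by apply: sumr_ge0 => k _; exact: sqr_ge0. Qed.

Lemma nrm_ge0 q (f : 'I_q -> R) : 0 <= nrm f.
Proof. exact: sqrtr_ge0. Qed.

Lemma nrm_sqr q (f : 'I_q -> R) : nrm f ^+ 2 = \sum_k f k ^+ 2.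
Proof. by rewrite /nrm sqr_sqrtr // sumsq_ge0. Qed.

Lemma eq_nrm q (f g : 'I_q -> R) : (forall k, f k = g k) -> nrm f = nrm g.
Proof. by move=> e; rewrite /nrm; congr Num.sqrt; apply: eq_bigr => k _; rewrite e. Qed.

Lemma nrm_scale q (c : R) (f : 'I_q -> R) : nrm (fun k => c * f k) = `|c| * nrm f.
Proof.
rewrite /nrm (eq_bigr (fun k => c ^+ 2 * f k ^+ 2)); last by move=> k _; rewrite exprMn.
by rewrite -mulr_sumr sqrtrM ?sqr_ge0 // sqrtr_sqr.
Qed.

Lemma cs (q : nat) (a b : 'I_q -> R) : \sum_k a k * b k <= nrm a * nrm b.
Proof.
have x0 := nrm_ge0 a; have y0 := nrm_ge0 b.
have key : 2 * (nrm a * nrm b) * \sum_k a k * b k <= 2 * (nrm a * nrm b) * (nrm a * nrm b).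
  have -> : 2 * (nrm a * nrm b) * (nrm a * nrm b) =
     \sum_k (nrm b ^+ 2 * a k ^+ 2 + nrm a ^+ 2 * b k ^+ 2).
    rewrite big_split /= -!mulr_sumr -!nrm_sqr; ring.
  rewrite mulr_sumr; apply: ler_sum => k _.
  have := sqr_ge0 (nrm b * a k - nrm a * b k); nra.
have [xy0|xyp] := eqVneq (nrm a * nrm b) 0.
  rewrite xy0; move/eqP: xy0; rewrite mulf_eq0 => /orP [] /eqP h.
  - have h2 : \sum_k a k ^+ 2 = 0 by rewrite -nrm_sqr h expr0n.
    have az := psumr_eq0P (fun k _ => sqr_ge0 (a k)) h2.
    rewrite big1 // => k _; have := az k isT; move/eqP; rewrite sqrf_eq0 => /eqP ->; by rewrite mul0r.
  - have h2 : \sum_k b k ^+ 2 = 0 by rewrite -nrm_sqr h expr0n.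
    have az := psumr_eq0P (fun k _ => sqr_ge0 (b k)) h2.
    rewrite big1 // => k _; have := az k isT; move/eqP; rewrite sqrf_eq0 => /eqP ->; by rewrite mulr0.
have pos : 0 < 2 * (nrm a * nrm b) by rewrite mulr_gt0 // lt0r xyp mulr_ge0.
by rewrite -(ler_pM2l pos).
Qed.

Lemma nrm_add q (a b : 'I_q -> R) : nrm (fun k => a k + b k) <= nrm a + nrm b.
Proof.
have x0 := nrm_ge0 a; have y0 := nrm_ge0 b.
rewrite -(ger0_norm (addr_ge0 x0 y0)) -sqrtr_sqr /nrm -/(nrm a) -/(nrm b).
rewrite ler_sqrt ?sqr_ge0 //.
rewrite (eq_bigr (fun k => a k ^+ 2 + b k ^+ 2 + 2 * (a k * b k))); last by move=> k _; ring.
rewrite !big_split /= -mulr_sumr -!nrm_sqr.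
have := cs a b; nra.
Qed.

Lemma nrm0 q : nrm (fun k : 'I_q => 0) = 0.
Proof. by rewrite /nrm big1 ?sqrtr0 // => k _; rewrite expr0n. Qed.

Lemma nrm_sum q (I : Type) (r : seq I) (P : pred I) (F : I -> 'I_q -> R) :
  nrm (fun k => \sum_(i <- r | P i) F i k) <= \sum_(i <- r | P i) nrm (F i).
Proof.
elim: r => [|i r IH].
  by rewrite big_nil (eq_nrm (g := fun _ => 0)) ?nrm0 // => k; rewrite big_nil.
rewrite big_cons; case Pi: (P i) => /=.
  rewrite (eq_nrm (g := fun k => F i k + \sum_(j <- r | P j) F j k)); last by move=> k; rewrite big_cons Pi.
  by apply: le_trans (nrm_add _ _) _; rewrite lerD2l.
by rewrite (eq_nrm (g := fun k => \sum_(j <- r | P j) F j k)) // => k; rewrite big_cons Pi.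
Qed.

Lemma le_bigmax0 p (F : 'I_p -> R) j : F j <= \big[Num.max/0]_(i < p) F i.
Proof.
rewrite unlock /=.
have : j \in index_enum 'I_p by rewrite mem_index_enum.
elim: (index_enum 'I_p) => [|i r IH] //=.
rewrite in_cons => /orP [/eqP ->|h]; rewrite le_max ?lexx //.
by rewrite IH ?orbT.
Qed.

Lemma bigmax_le p (F : 'I_p -> R) c :
  0 <= c -> (forall i, F i <= c) -> \big[Num.max/0]_(i < p) F i <= c.
Proof.
move=> c0 h; apply: (big_ind (fun x => x <= c)) => //.
by move=> x y hx hy; rewrite ge_max hx hy.
Qed.

Lemma bigmax_ge0 p (F : 'I_p -> R) : (forall i, 0 <= F i) -> 0 <= \big[Num.max/0]_(i < p) F i.
Proof.
move=> h; apply: (big_ind (fun x => 0 <= x)) => //.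
by move=> x y hx hy; rewrite le_max hx.
Qed.

Lemma rownorm_nrm p q (M : 'M[R]_(p, q)) j : rownorm M j = nrm (fun k => M j k).
Proof. by []. Qed.

Lemma rownorm_ge0 p q (M : 'M[R]_(p, q)) j : 0 <= rownorm M j.
Proof. exact: sqrtr_ge0. Qed.

Lemma rownorm_restr p q (S : {set 'I_p}) (M : 'M[R]_(p, q)) j :
  rownorm (rowrestr S M) j = if j \in S then rownorm M j else 0.
Proof.
rewrite !rownorm_nrm; case: ifP => h.
  by apply: eq_nrm => k; rewrite mxE h.
by rewrite (eq_nrm (g := fun _ => 0)) ?nrm0 // => k; rewrite mxE h.
Qed.

Lemma norm21_restr p q (S : {set 'I_p}) (M : 'M[R]_(p, q)) :
  norm21 (rowrestr S M) = \sum_(j in S) rownorm M j.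
Proof.
by rewrite /norm21 (eq_bigr _ (fun j _ => rownorm_restr S M j)) -big_mkcond.
Qed.

End H.

Unset Implicit Arguments. Set Strict Implicit.

Theorem lemma4 (R : realType) (n p q s : nat) (alpha : R)
  (X : 'M[R]_(n, p)) (Bstar Bhat : 'M[R]_(p, q)) :
  (1 <= s)%N -> 1 < alpha ->
  let Psi := n%:R^-1 *: (X^T *m X) in
  (forall j : 'I_p, Psi j j = 1) ->
  (forall j j' : 'I_p, j' != j -> `|Psi j j'| <= (7 * alpha * s%:R)^-1) ->
  let S := rowsupp Bstar in
  (#|S| <= s)%N ->
  let Delta := Bhat - Bstar in
  norm21 (rowrestr (~: S) Delta) <= 3 * norm21 (rowrestr S Delta) ->
  [/\ frob (rowrestr S Delta)
        <= alpha / (alpha - 1) * 4 * Num.sqrt s%:R * norm2inf (Psi *m Delta),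
      norm21 Delta <= alpha / (alpha - 1) * 16 * s%:R * norm2inf (Psi *m Delta)
    & norm2inf Delta <= (1 + 16 / (7 * (alpha - 1))) * norm2inf (Psi *m Delta)].
Proof.
move=> s1 a1 Psi Pjj Poff S hS Delta hcone.
set G := norm2inf (Psi *m Delta).
set N := norm21 Delta.
set mu := (7 * alpha * s%:R)^-1.
have s0 : 0 < s%:R :> R by rewrite ltr0n.
have a0 : 0 < alpha by lra.
have ks0 : 0 < 7 * alpha * s%:R by rewrite !mulr_gt0 // ltr0n.
have mu0 : 0 <= mu by rewrite /mu invr_ge0 ltW.
have G0 : 0 <= G by apply: bigmax_ge0 => i; exact: rownorm_ge0.
have N0 : 0 <= N by apply: sumr_ge0 => i _; exact: rownorm_ge0.
have rowb : forall j, rownorm Delta j <= G + mu * N.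
  move=> j.
  have e : forall k, Delta j k = (Psi *m Delta) j k
      + \sum_(j' | j' != j) (- Psi j j') * Delta j' k.
    move=> k; rewrite [X in _ = X + _]mxE [X in _ = X + _](bigD1 j) //= Pjj mul1r.
    rewrite -addrA -big_split /=.
    by rewrite big1 ?addr0 // => i _; ring.
  rewrite rownorm_nrm (eq_nrm e).
  apply: le_trans (nrm_add _ _) _; apply: lerD.
    by rewrite -rownorm_nrm; exact: (le_bigmax0 (fun i => rownorm (Psi *m Delta) i)).
  apply: le_trans (nrm_sum _ _ _) _.
  rewrite (eq_bigr (fun j' => `|Psi j j'| * rownorm Delta j')); last first.
    by move=> j' _; rewrite nrm_scale normrN.
  apply: (@le_trans _ _ (\sum_(j' | j' != j) mu * rownorm Delta j')).
    by apply: ler_sum => j' hj; apply: ler_wpM2r; [exact: rownorm_ge0 | exact: Poff].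
  rewrite -mulr_sumr; apply: ler_wpM2l => //.
  by rewrite /N /norm21 [X in _ <= X](bigD1 j) //= lerDr rownorm_ge0.
set e := mu * N.
have e0 : 0 <= e by rewrite mulr_ge0.
have hNe : N = 7 * alpha * s%:R * e by rewrite /e /mu mulrA mulfV ?mul1r // gt_eqF.
have hN : N = norm21 (rowrestr S Delta) + norm21 (rowrestr (~: S) Delta).
  rewrite !norm21_restr /N /norm21 (bigID (fun j => j \in S)) /=.
  by congr (_ + _); apply: eq_bigl => j; rewrite in_setC.
have aS : norm21 (rowrestr S Delta) <= s%:R * (G + e).
  rewrite norm21_restr; apply: (@le_trans _ _ (\sum_(j in S) (G + e))).
    by apply: ler_sum => j _; exact: rowb.
  rewrite sumr_const -[X in X <= _]mulr_natr [X in X <= _]mulrC.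
  apply: ler_wpM2r; first by rewrite addr_ge0.
  by rewrite ler_nat.
have E1 : s%:R * (7 * alpha * e) <= s%:R * (4 * (G + e)).
  have : N <= 4 * (s%:R * (G + e)) by lra.
  rewrite hNe => h; nra.
have E2 : 7 * alpha * e <= 4 * (G + e) by rewrite -(ler_pM2l s0).
have E : 7 * (alpha - 1) * e <= 16 * G by nra.
have hc : G + e <= (1 + 16 / (7 * (alpha - 1))) * G.
  have : e <= 16 / (7 * (alpha - 1)) * G.
    by rewrite mulrAC ler_pdivlMr; [lra | lra].
  lra.
have rowb' : forall j, rownorm Delta j <= G + e by move=> j; exact: rowb.
split.
- have hF : \sum_j \sum_k (rowrestr S Delta) j k ^+ 2 = \sum_(j in S) rownorm Delta j ^+ 2.
    rewrite [RHS]big_mkcond; apply: eq_bigr => j _.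
    rewrite -(nrm_sqr (fun k => rowrestr S Delta j k)) -rownorm_nrm rownorm_restr; case: ifP => //; by rewrite expr0n.
  have hF2 : \sum_(j in S) rownorm Delta j ^+ 2 <= s%:R * (G + e) ^+ 2.
    apply: (@le_trans _ _ (\sum_(j in S) (G + e) ^+ 2)).
      by apply: ler_sum => j _; have := rowb' j; have := rownorm_ge0 Delta j; nra.
    rewrite sumr_const -[X in X <= _]mulr_natr [X in X <= _]mulrC.
    by apply: ler_wpM2r; [exact: sqr_ge0 | rewrite ler_nat].
  have Ge0 : 0 <= G + e by rewrite addr_ge0.
  have hsq : frob (rowrestr S Delta) <= Num.sqrt s%:R * (G + e).
    rewrite /frob hF -(ger0_norm Ge0) -sqrtr_sqr -sqrtrM ?ler0n // ler_sqrt //.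
    by rewrite mulr_ge0 ?ler0n ?sqr_ge0.
  apply: le_trans hsq _.
  have -> : alpha / (alpha - 1) * 4 * Num.sqrt s%:R * G
      = Num.sqrt s%:R * ((alpha * 4 * G) / (alpha - 1)) by ring.
  apply: ler_wpM2l; first exact: sqrtr_ge0.
  rewrite ler_pdivlMr; last lra.
  have am1 : 0 < alpha - 1 by lra.
  have := mulr_ge0 (ltW am1) G0.
  nra.
- rewrite -/N.
  have -> : alpha / (alpha - 1) * 16 * s%:R * G = (alpha * 16 * s%:R * G) / (alpha - 1) by ring.
  rewrite ler_pdivlMr; last lra.
  have := ler_wpM2l (ltW (mulr_gt0 a0 s0)) E.
  rewrite hNe; nra.
- apply: le_trans hc; apply: bigmax_le => //; lra.
Qed.
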